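(* Let $G$ be a compact group such that for every positive integer $n$ there is exactly one equivalence class of irreducible representations of $G$ of dimension $n$; for $j\in\frac12\mathbb{Z}_{\ge0}$ let $\chi_j$ be the character of the irreducible representation of dimension $2j+1$. Then for every $j\in\frac12\mathbb{Z}_{\ge0}$, $$\chi_j=\chi_{1/2}^{\,2j}+\sum_{i=1}^{\lfloor j\rfloor}(-1)^i\binom{2j-i}{i}\chi_{1/2}^{\,2j-2i},$$ where $\chi_{1/2}^{\,0}=\chi_0$ is the trivial character and powers are pointwise products.
   Context: Representations are continuous finite-dimensional unitary representations on complex Hilbert spaces; characters are $\chi(g)=\mathrm{tr}\,D(g)$. *)

(* Defs.v *)
From HB Require Import structures.
From mathcomp Require Import all_boot all_order all_algebra.
From mathcomp Require Import all_classical all_reals all_analysis.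
From mathcomp Require Import complex.
Set Implicit Arguments. Unset Strict Implicit. Unset Printing Implicit Defensive.
Import GRing.Theory Num.Theory.
Local Open Scope ring_scope.
Local Open Scope classical_set_scope.

Record compact_group (G : topologicalType) (mul : G -> G -> G) (inv : G -> G)
    (one : G) : Prop := CompactGroup {
  cg_mulA : forall x y z, mul x (mul y z) = mul (mul x y) z;
  cg_mul1g : forall x, mul one x = x;
  cg_mulVg : forall x, mul (inv x) x = one;
  cg_mul_cont : continuous (fun p : G * G => mul p.1 p.2);
  cg_inv_cont : continuous inv;
  cg_hausdorff : hausdorff_space G;
  cg_compact : compact [set: G] }.

(* A continuous finite-dimensional unitary representation of dimension n on
   C^n (C = R[i], matrices acting on column vectors). *)
Definition unitary_rep (G : topologicalType) (mul : G -> G -> G)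
    (R : realType) (n : nat) (D : G -> 'M[R[i]]_n) : Prop :=
  (forall g h, D (mul g h) = D g *m D h) /\
  (forall g, (map_mx (@conjc R) (D g))^T *m D g = 1%:M) /\
  (forall i j, continuous (fun g => complex.Re (D g i j) : R^o) /\
               continuous (fun g => complex.Im (D g i j) : R^o)).

(* W (spanned by the columns of U^T, i.e. the transposes of the rows of U)
   is invariant under every D g. *)
Definition invariant_subspace (G : Type) (R : realType) (n : nat)
    (D : G -> 'M[R[i]]_n) (U : 'M[R[i]]_n) : Prop :=
  forall g, (U *m (D g)^T <= U)%MS.

Definition irrep (G : topologicalType) (mul : G -> G -> G)
    (R : realType) (n : nat) (D : G -> 'M[R[i]]_n) : Prop :=
  [/\ unitary_rep mul D, (0 < n)%N &
      forall U : 'M[R[i]]_n, invariant_subspace D U ->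
        (U == (0 : 'M[R[i]]_n))%MS \/ row_full U].

Definition rep_equiv (G : Type) (R : realType) (n : nat)
    (D1 D2 : G -> 'M[R[i]]_n) : Prop :=
  exists2 P : 'M[R[i]]_n, P \in unitmx & forall g, P *m D1 g = D2 g *m P.

Definition character (G : Type) (R : realType) (n : nat)
    (D : G -> 'M[R[i]]_n) : G -> R[i] := fun g => \tr (D g).

(* Main.v *)
Require Import Defs.
From HB Require Import structures.
From mathcomp Require Import all_boot all_order all_algebra.
From mathcomp Require Import all_classical all_reals all_analysis.
From mathcomp Require Import complex spectral mxtens zify ring.
Set Implicit Arguments. Unset Strict Implicit. Unset Printing Implicit Defensive.
Import GRing.Theory Num.Theory.
Local Open Scope ring_scope.
Local Open Scope sesquilinear_scope.

Section Cont.
Variables (G : topologicalType) (R : realType).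

Definition ccont (f : G -> R[i]) :=
  continuous (fun g => complex.Re (f g) : R^o) /\
  continuous (fun g => complex.Im (f g) : R^o).

Lemma ccont_cst (c : R[i]) : ccont (fun _ => c).
Proof. by split; apply: cst_continuous. Qed.

Lemma ccontD f h : ccont f -> ccont h -> ccont (fun g => f g + h g).
Proof.
move=> [f1 f2] [h1 h2]; split.
  have -> : (fun g => complex.Re (f g + h g) : R^o) =
     (fun g => complex.Re (f g) : R^o) + (fun g => complex.Re (h g) : R^o).
    by apply: funext=> y; rewrite !fctE /=; case: (f y) => a b; case: (h y).
  by move=> x; apply: continuousD; [exact: f1 | exact: h1].
have -> : (fun g => complex.Im (f g + h g) : R^o) =
   (fun g => complex.Im (f g) : R^o) + (fun g => complex.Im (h g) : R^o).
  by apply: funext=> y; rewrite !fctE /=; case: (f y) => a b; case: (h y).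
by move=> x; apply: continuousD; [exact: f2 | exact: h2].
Qed.

Lemma ccontM f h : ccont f -> ccont h -> ccont (fun g => f g * h g).
Proof.
move=> [f1 f2] [h1 h2]; split.
  have -> : (fun g => complex.Re (f g * h g) : R^o) =
     ((fun g => complex.Re (f g) : R^o) \* (fun g => complex.Re (h g) : R^o)) -
     ((fun g => complex.Im (f g) : R^o) \* (fun g => complex.Im (h g) : R^o)).
    by apply: funext=> y; rewrite !fctE /=; case: (f y) => a b; case: (h y).
  by move=> x; apply: continuousB; apply: continuousM; [exact: f1|exact: h1|exact: f2|exact: h2].
have -> : (fun g => complex.Im (f g * h g) : R^o) =
   ((fun g => complex.Re (f g) : R^o) \* (fun g => complex.Im (h g) : R^o)) +
   ((fun g => complex.Im (f g) : R^o) \* (fun g => complex.Re (h g) : R^o)).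
  by apply: funext=> y; rewrite !fctE /=; case: (f y) => a b; case: (h y).
by move=> x; apply: continuousD; apply: continuousM; [exact: f1|exact: h2|exact: f2|exact: h1].
Qed.

Lemma ccontJ f : ccont f -> ccont (fun g => conjc (f g)).
Proof.
move=> [f1 f2]; split.
  have -> : (fun g => complex.Re (conjc (f g)) : R^o) = (fun g => complex.Re (f g) : R^o).
    by apply: funext=> y; rewrite ?fctE /=; case: (f y).
  by [].
have -> : (fun g => complex.Im (conjc (f g)) : R^o) = (fun g => - complex.Im (f g) : R^o).
  by apply: funext=> y; rewrite ?fctE /=; case: (f y).
by move=> x; apply: continuousN; exact: f2.
Qed.

Lemma ccont_ext f h : (forall g, f g = h g) -> ccont f -> ccont h.
Proof. by move=> e; have -> : f = h by apply: funext. Qed.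

Lemma ccont_sum (I : finType) (F : I -> G -> R[i]) :
  (forall i, ccont (F i)) -> ccont (fun g => \sum_i F i g).
Proof.
move=> HF.
apply: (@ccont_ext (fun g => \sum_(i <- enum I) F i g)).
  by move=> g; rewrite big_enum.
elim: (enum I) => [|a s IH].
  by apply: (ccont_ext _ (ccont_cst 0)) => g; rewrite big_nil.
by apply: (ccont_ext _ (ccontD (HF a) IH)) => g; rewrite big_cons.
Qed.

End Cont.

Notation orth B := (orthomx Num.conj (mx_of_hermitian (hermitian1mx _)) B).

Section Rep.
Variables (G : topologicalType) (mul : G -> G -> G) (R : realType).
Local Notation C := (R[i]).

Definition rrep n (M : G -> 'M[C]_n) : Prop :=
  [/\ forall g h, M (mul g h) = M h *m M g,
      forall g, M g \is unitarymx &
      forall i j, ccont (fun g => M g i j)].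

Definition stab n (M : G -> 'M[C]_n) m (U : 'M[C]_(m, n)) :=
  forall g, (U *m M g <= U)%MS.

Definition rirr n (M : G -> 'M[C]_n) : Prop :=
  [/\ rrep M, (0 < n)%N &
      forall U : 'M[C]_n, stab M U -> U = 0 \/ row_full U].

Definition hom a b (A : G -> 'M[C]_a) (B : G -> 'M[C]_b) (X : 'M[C]_(a, b)) :=
  forall g, A g *m X = X *m B g.

Lemma unitary_sq n (M : 'M[C]_n) : M \is unitarymx -> M^t* *m M = 1%:M.
Proof.
by rewrite -trmxC_unitary => /unitarymxP; rewrite trmxCK.
Qed.

Lemma irrep_rirr n (D : G -> 'M[C]_n) : irrep mul D -> rirr (fun g => (D g)^T).
Proof.
case=> [[Hm [Hu Hc]] Hn Hirr]; split=> //.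
- split=> [g h|g|i j]; first by rewrite Hm trmx_mul.
  + apply/unitarymxP; rewrite trmxK.
    by have := congr1 trmx (Hu g); rewrite trmx_mul trmxK trmx1.
  + by apply: (ccont_ext _ (Hc j i)) => g; rewrite mxE.
- by move=> U HU; case: (Hirr U HU) => [/eqmx0P|]; [left|right].
Qed.

Lemma rirr_irrep n (M : G -> 'M[C]_n) : rirr M -> irrep mul (fun g => (M g)^T).
Proof.
case=> [[Hm Hu Hc] Hn Hirr]; split=> //.
- split; first by move=> g h; rewrite Hm trmx_mul.
  split.
  + move=> g; have := unitarymxP (Hu g).
    by move/(congr1 trmx); rewrite trmx_mul trmx1.
  + move=> i j; have := ccont_ext _ (Hc j i).
    by apply=> g; rewrite mxE.
- move=> U HU; have HU' : stab M U by move=> g; have := HU g; rewrite trmxK.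
  by case: (Hirr U HU') => [->|]; [left; apply/eqmx0P|right].
Qed.

Lemma equiv_hom n (D1 D2 : G -> 'M[C]_n) : rep_equiv D1 D2 ->
  exists2 Q, Q \in unitmx & hom (fun g => (D1 g)^T) (fun g => (D2 g)^T) Q.
Proof.
case=> P Pu HP; exists P^T; first by rewrite unitmx_tr.
by move=> g; rewrite -!trmx_mul HP.
Qed.

Lemma hom_ker a b (A : G -> 'M[C]_a) (B : G -> 'M[C]_b) X :
  hom A B X -> stab A (kermx X).
Proof.
move=> H g; apply/sub_kermxP.
by rewrite -mulmxA H mulmxA mulmx_ker mul0mx.
Qed.

Lemma hom_img a b (A : G -> 'M[C]_a) (B : G -> 'M[C]_b) X :
  hom A B X -> stab B X.
Proof. by move=> H g; rewrite -H submxMl. Qed.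

Lemma stab_eqmx N (T : G -> 'M[C]_N) m1 m2 (U : 'M[C]_(m1, N)) (V : 'M[C]_(m2, N)) :
  (U :=: V)%MS -> stab T U -> stab T V.
Proof.
move=> e HU g; have /andP[UV VU] : (U == V)%MS by apply/eqmxP.
exact: submx_trans (submxMr (T g) VU) (submx_trans (HU g) UV).
Qed.

Lemma rirr_stab b (B : G -> 'M[C]_b) m (X : 'M[C]_(m, b)) :
  rirr B -> stab B X -> X = 0 \/ row_full X.
Proof.
move=> [_ _ HB] HX.
have HX' : stab B <<X>>%MS := stab_eqmx (eqmx_sym (genmxE X)) HX.
case: (HB _ HX') => [H0|].
  left; have := congr1 mxrank H0; rewrite mxrank_gen mxrank0 => /eqP.
  by rewrite mxrank_eq0 => /eqP.
by rewrite /row_full mxrank_gen; right.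
Qed.

Lemma schur_free a b (A : G -> 'M[C]_a) (B : G -> 'M[C]_b) X :
  rirr A -> rirr B -> hom A B X -> X != 0 -> row_free X /\ row_full X.
Proof.
move=> HA HB H Xn0; split.
  rewrite -kermx_eq0; case: (rirr_stab HA (hom_ker H)) => [->//|Hf].
  exfalso; move/negP: Xn0; apply; apply/eqP.
  by have /sub_kermxP := submx_full 1%:M Hf; rewrite mul1mx.
by case: (rirr_stab HB (hom_img H)) => // X0; rewrite X0 eqxx in Xn0.
Qed.

Lemma schur_dim a b (A : G -> 'M[C]_a) (B : G -> 'M[C]_b) X :
  rirr A -> rirr B -> hom A B X -> a != b -> X = 0.
Proof.
move=> HA HB H; apply: contraNeq => Xn0.
have [/eqP fr fu] := schur_free HA HB H Xn0.
by rewrite -fr; apply/eqP; rewrite (eqP fu).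
Qed.

Lemma hom_scalar n (A : G -> 'M[C]_n) c : hom A A c%:M.
Proof. by move=> g; rewrite scalar_mxC. Qed.

Lemma homB a b (A : G -> 'M[C]_a) (B : G -> 'M[C]_b) X Y :
  hom A B X -> hom A B Y -> hom A B (X - Y).
Proof. by move=> HX HY g; rewrite mulmxBr mulmxBl HX HY. Qed.

Lemma homZ a b (A : G -> 'M[C]_a) (B : G -> 'M[C]_b) c X :
  hom A B X -> hom A B (c *: X).
Proof. by move=> HX g; rewrite -scalemxAr HX scalemxAl. Qed.

Lemma hom_comp a b d (A : G -> 'M[C]_a) (B : G -> 'M[C]_b) (D : G -> 'M[C]_d) X Y :
  hom A B X -> hom B D Y -> hom A D (X *m Y).
Proof. by move=> HX HY g; rewrite mulmxA HX -mulmxA HY mulmxA. Qed.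

Lemma schur_scalar n (A : G -> 'M[C]_n) X :
  rirr A -> hom A A X -> exists c, X = c%:M.
Proof.
move=> HA H; have [_ n0 HAi] := HA.
have [c Hc] := eigenvalue_closed X n0.
have HA' := HA.
exists c; apply/eqP; rewrite -subr_eq0; apply/eqP.
have H' : hom A A (X - c%:M) by apply: homB => //; apply: hom_scalar.
case: (rirr_stab HA' (hom_ker H')) => [/eqP|Hf]; first by move/negP: Hc.
by have /sub_kermxP := submx_full 1%:M Hf; rewrite mul1mx.
Qed.

Lemma schur_line n (A B : G -> 'M[C]_n) Q X :
  rirr A -> hom A B Q -> Q \in unitmx -> hom A B X -> exists c, X = c *: Q.
Proof.
move=> HA HQ Qu HX.
have HQi : hom B A (invmx Q).
  by move=> g; rewrite -[LHS](mulKmx Qu) (mulmxA Q) -HQ mulmxK.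
have [c Hc] := schur_scalar HA (hom_comp HX HQi).
exists c; by rewrite -mul_scalar_mx -Hc mulmxKV.
Qed.

Lemma hom_tr n (A B : G -> 'M[C]_n) Q g :
  hom A B Q -> Q \in unitmx -> \tr (A g) = \tr (B g).
Proof.
move=> HQ Qu; have : B g = invmx Q *m A g *m Q by rewrite -mulmxA HQ mulKmx.
by move=> ->; rewrite mxtrace_mulC mulmxA mulmxV // mul1mx.
Qed.

Lemma proj_id m r N (P : 'M[C]_(r, N)) (x : 'M[C]_(m, N)) :
  P \is unitarymx -> (x <= P)%MS -> x *m P^t* *m P = x.
Proof.
move=> Pu /submxP [y ->]; by rewrite -(mulmxA y) (unitarymxP Pu) mulmx1.
Qed.

Lemma stab_ortho N (T : G -> 'M[C]_N) m (U : 'M[C]_(m, N)) :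
  (forall g, T g \is unitarymx) -> stab T U -> stab T (orth U).
Proof.
move=> Tu HU g.
have eU : (U <= U *m T g)%MS.
  rewrite -(mxrank_leqif_sup (HU g)).
  by rewrite mxrankMfree // row_free_unit unitarymx_unit.
case/submxP: eU => Y eY.
have H0 : orth U *m U^t* = 0 by apply/orthomx1P.
have e2 : U^t* = (T g)^t* *m U^t* *m Y^t*.
  by rewrite {1}eY !trmx_mul !map_mxM ?mulmxA.
apply/orthomx1P; rewrite e2 !mulmxA -(mulmxA _ (T g)) (unitarymxP (Tu g)).
by rewrite mulmx1 H0 !mul0mx.
Qed.

Lemma tC_mul m n p (A : 'M[C]_(m, n)) (B : 'M[C]_(n, p)) :
  (A *m B)^t* = B^t* *m A^t*.
Proof. by rewrite trmx_mul map_mxM. Qed.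

Definition restr N (T : G -> 'M[C]_N) r (P : 'M[C]_(r, N)) :=
  fun g => P *m T g *m P^t*.

Lemma restr_hom N (T : G -> 'M[C]_N) r (P : 'M[C]_(r, N)) :
  P \is unitarymx -> stab T P -> hom (restr T P) T P.
Proof. by move=> Pu HP g; rewrite /restr proj_id. Qed.

Lemma restr_rrep N (T : G -> 'M[C]_N) r (P : 'M[C]_(r, N)) :
  rrep T -> P \is unitarymx -> stab T P -> rrep (restr T P).
Proof.
move=> [Tm Tu Tc] Pu HP; have Hh := restr_hom Pu HP.
split.
- move=> g h; rewrite /restr Tm !mulmxA -Hh.
  by rewrite -(mulmxA _ P (P^t*)) (unitarymxP Pu) mulmx1.
- move=> g; apply/unitarymxP; rewrite /restr !tC_mul trmxCK !mulmxA.
  rewrite proj_id // -(mulmxA P) (unitarymxP (Tu g)) mulmx1.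
  exact: (unitarymxP Pu).
- move=> i j.
  apply: (ccont_ext (f := fun g => \sum_l (\sum_k P i k * T g k l) * (P^t*) l j)).
    by move=> g; rewrite /restr [RHS]mxE; apply: eq_bigr => l _; rewrite [in RHS]mxE.
  apply: ccont_sum => l; apply: ccontM; last exact: ccont_cst.
  apply: ccont_sum => k; apply: ccontM; [exact: ccont_cst| exact: Tc].
Qed.

Lemma hom_adj a b (A : G -> 'M[C]_a) (T : G -> 'M[C]_b) P g :
  A g \is unitarymx -> T g \is unitarymx -> hom A T P ->
  T g *m P^t* = P^t* *m A g.
Proof.
move=> Au Tu H.
have e1 : P *m (T g)^t* = (A g)^t* *m P.
  have : (A g)^t* *m (A g *m P) *m (T g)^t* = (A g)^t* *m P.
    by rewrite H -mulmxA -(mulmxA P) (unitarymxP Tu) mulmx1.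
  by rewrite mulmxA unitary_sq // mul1mx.
by have := congr1 (fun M => M^t*) e1; rewrite !tC_mul !trmxCK.
Qed.

Lemma sub_irrep N (T : G -> 'M[C]_N) s (S : 'M[C]_(s, N)) :
  rrep T -> stab T S -> S != 0 ->
  exists d (Cd : G -> 'M[C]_d) (psi : 'M[C]_(d, N)),
    [/\ rirr Cd, (d <= \rank S)%N, hom Cd T psi, psi != 0 & (psi <= S)%MS].
Proof.
move=> HT; have [n ltSn] := ubnP (\rank S).
elim: n s S ltSn => // n IH s S ltSn HS Sn0.
set P := schmidt (row_base S).
have Pu : P \is unitarymx by apply: schmidt_unitarymx; apply: rank_leq_col.
have eP : (P :=: S)%MS.
  exact: eqmx_trans (eqmx_schmidt_free (row_base_free S)) (eq_row_base S).
have HP : stab T P := stab_eqmx (eqmx_sym eP) HS.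
have rP : \rank P = \rank S by rewrite mxrank_unitary.
have HA := restr_rrep HT Pu HP.
have Hh := restr_hom Pu HP.
have [Hirr|Hn] := pselect (forall U : 'M[C]_(\rank S),
                    stab (restr T P) U -> U = 0 \/ row_full U).
  exists (\rank S), (restr T P), P; split=> //.
  - by split=> //; rewrite lt0n mxrank_eq0.
  - by rewrite -mxrank_eq0 rP mxrank_eq0.
  - by rewrite eP.
move/existsNP: Hn => [U /not_implyP [HU /not_orP [Un0 Unf]]].
have HS' : stab T (U *m P).
  by move=> g; rewrite -mulmxA -Hh mulmxA submxMr // HU.
have rS' : \rank (U *m P) = \rank U.
  by rewrite mxrankMfree // /row_free rP.
have ltU : (\rank U < \rank S)%N.
  by rewrite ltn_neqAle rank_leq_col andbT; apply/negP => E; apply: Unf; exact: E.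
have S'n0 : U *m P != 0.
  by rewrite -mxrank_eq0 rS' mxrank_eq0; apply/eqP.
have ltS' : (\rank (U *m P) < n)%N.
  by rewrite rS'; apply: leq_trans ltU _; rewrite -ltnS.
have [d [Cd [psi [H1 H2 H3 H4 H5]]]] := IH _ (U *m P) ltS' HS' S'n0.
exists d, Cd, psi; split=> //.
  by apply: leq_trans H2 _; rewrite rS' ltnW.
apply: submx_trans H5 _; apply: submx_trans (submxMl U P) _.
by rewrite eP.
Qed.

Lemma sum_tens m n (f : 'I_(m * n) -> C) :
  \sum_k f k = \sum_i \sum_j f (mxtens_index (i, j)).
Proof.
rewrite pair_big /=.
rewrite (reindex (@mxtens_index m n)) /=; first by apply: eq_bigr => -[i j].
by exists (@mxtens_unindex m n) => k _; rewrite (mxtens_indexK, mxtens_unindexK).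
Qed.

Lemma mxtens_index_eq m n (p q : 'I_m * 'I_n) :
  (mxtens_index p == mxtens_index q) = (p == q).
Proof. exact: (can_eq (@mxtens_indexK m n)). Qed.

Lemma tens1 m n : (1%:M : 'M[C]_m) *t (1%:M : 'M[C]_n) = 1%:M.
Proof.
apply/matrixP => k l.
case: (mxtens_indexP k) => i j; case: (mxtens_indexP l) => i' j'.
rewrite tensmxE !mxE mxtens_index_eq xpair_eqE.
by case: (i == i'); case: (j == j'); rewrite ?mulr1 ?mulr0.
Qed.

Lemma mxtrace_tens m n (A : 'M[C]_m) (B : 'M[C]_n) :
  \tr (A *t B) = \tr A * \tr B.
Proof.
rewrite /mxtrace sum_tens big_distrl /=; apply: eq_bigr => i _.
rewrite big_distrr /=; apply: eq_bigr => j _.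
by rewrite tensmxE.
Qed.

Lemma tC_tens m n p q (A : 'M[C]_(m, n)) (B : 'M[C]_(p, q)) :
  (A *t B)^t* = A^t* *t B^t*.
Proof. by rewrite trmx_tens map_mxT. Qed.

Lemma tens_rrep p a (F : G -> 'M[C]_p) (A : G -> 'M[C]_a) :
  rrep F -> rrep A -> rrep (fun g => F g *t A g).
Proof.
move=> [Fm Fu Fc] [Am Au Ac]; split.
- by move=> g h; rewrite Fm Am tensmx_mul.
- move=> g; apply/unitarymxP.
  by rewrite tC_tens tensmx_mul (unitarymxP (Fu g)) (unitarymxP (Au g)) tens1.
- move=> k l; apply: (ccont_ext (f := fun g =>
     F g (mxtens_unindex k).1 (mxtens_unindex l).1 *
     A g (mxtens_unindex k).2 (mxtens_unindex l).2)).
    by move=> g; rewrite mxE.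
  by apply: ccontM; [apply: Fc | apply: Ac].
Qed.

Definition cj n (F : G -> 'M[C]_n) := fun g => map_mx Num.conj (F g).

Lemma cj_rirr n (F : G -> 'M[C]_n) : rirr F -> rirr (cj F).
Proof.
move=> HF; have [[Fm Fu Fc] n0 Fi] := HF; split=> //.
- split.
  + by move=> g h; rewrite /cj Fm map_mxM.
  + by move=> g; rewrite /cj conjC_unitary.
  + move=> i j; apply: (ccont_ext (f := fun g => conjc (F g i j))).
      by move=> g; rewrite /cj mxE.
    exact: ccontJ.
- move=> U HU.
  have HU' : stab F (map_mx Num.conj U).
    move=> g; rewrite -[F g](map_mxCK (F g)) -map_mxM map_submx.
    exact: HU.
  case: (rirr_stab HF HU') => [H0|Hf].
    left; apply/eqP; rewrite -(map_mx_eq0 Num.conj) H0 //.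
  by right; rewrite -(row_full_map Num.conj).
Qed.

Definition slice p a b (X : 'M[C]_(a, p * b)) (i : 'I_a) : 'M[C]_(p, b) :=
  \matrix_(s, j) X i (mxtens_index (s, j)).

Definition resh p a b (X : 'M[C]_(a, p * b)) : 'M[C]_(p * a, b) :=
  \matrix_(k, j) X (mxtens_unindex k).2 (mxtens_index ((mxtens_unindex k).1, j)).

Lemma reshE p a b (X : 'M[C]_(a, p * b)) s i j :
  resh X (mxtens_index (s, i)) j = X i (mxtens_index (s, j)).
Proof. by rewrite mxE mxtens_indexK. Qed.

Lemma resh_inj p a b : injective (@resh p a b).
Proof.
move=> X Y e; apply/matrixP => i l; case: (mxtens_indexP l) => s j.
by rewrite -!reshE e.
Qed.

Lemma reshZ p a b c (X : 'M[C]_(a, p * b)) : resh (c *: X) = c *: resh X.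
Proof. by apply/matrixP => k j; rewrite !mxE. Qed.

Lemma resh0 p a b : resh (0 : 'M[C]_(a, p * b)) = 0.
Proof. by apply/matrixP => k j; rewrite !mxE. Qed.

Section Dual.
Variables (p a b : nat) (F : 'M[C]_p) (A : 'M[C]_a) (B : 'M[C]_b)
  (X : 'M[C]_(a, p * b)).

Definition Ssum i := \sum_i' A i i' *: slice X i'.

Lemma E1 i s j : (X *m (F *t B)) i (mxtens_index (s, j)) =
  (F^T *m slice X i *m B) s j.
Proof.
rewrite !mxE sum_tens.
under [RHS]eq_bigr => j' _ do rewrite mxE big_distrl /=.
rewrite exchange_big /=; apply: eq_bigr => s' _; apply: eq_bigr => j' _.
by rewrite tensmxE !mxE mulrCA mulrA.
Qed.

Lemma E2 i s j : (A *m X) i (mxtens_index (s, j)) = Ssum i s j.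
Proof.
rewrite !mxE summxE; apply: eq_bigr => i' _.
by rewrite !mxE.
Qed.

Lemma E3 (M : 'M[C]_p) t i j :
  ((M *t A) *m resh X) (mxtens_index (t, i)) j = (M *m Ssum i) t j.
Proof.
rewrite !mxE sum_tens; apply: eq_bigr => s _.
rewrite /Ssum summxE big_distrr /=; apply: eq_bigr => i' _.
by rewrite tensmxE reshE !mxE mulrA.
Qed.

Lemma E4 t i j : (resh X *m B) (mxtens_index (t, i)) j = (slice X i *m B) t j.
Proof.
by rewrite !mxE; apply: eq_bigr => j' _; rewrite reshE mxE.
Qed.

End Dual.

Lemma dual p a b (F : G -> 'M[C]_p) (A : G -> 'M[C]_a) (B : G -> 'M[C]_b) X :
  (forall g, F g \is unitarymx) ->
  hom A (fun g => F g *t B g) X <-> hom (fun g => cj F g *t A g) B (resh X).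
Proof.
move=> Fu.
have L1 g : (F g)^T *m cj F g = 1%:M.
  by have := congr1 trmx (unitary_sq (Fu g)); rewrite trmx_mul map_trmx trmxK trmx1.
have L2 g : cj F g *m (F g)^T = 1%:M.
  by have := congr1 trmx (unitarymxP (Fu g)); rewrite trmx_mul trmx1 map_trmx trmxK.
split=> H g.
- have Hi i : Ssum (A g) X i = (F g)^T *m slice X i *m B g.
    apply/matrixP => s j; by rewrite -E2 H E1.
  apply/matrixP => k j; case: (mxtens_indexP k) => t i.
  by rewrite E3 E4 Hi !mulmxA L2 mul1mx.
- have Hi i : cj F g *m Ssum (A g) X i = slice X i *m B g.
    apply/matrixP => t j; by rewrite -E3 H E4.
  apply/matrixP => i k; case: (mxtens_indexP k) => s j.
  by rewrite E2 E1 -[Ssum _ _ _]mul1mx -(L1 g) -mulmxA Hi mulmxA.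
Qed.

Lemma reshK p a b (Z : 'M[C]_(p * a, b)) :
  resh (\matrix_(i, l) Z (mxtens_index ((mxtens_unindex l).1, i)) (mxtens_unindex l).2
        : 'M[C]_(a, p * b)) = Z.
Proof.
apply/matrixP => k j; case: (mxtens_indexP k) => s i.
by rewrite reshE mxE mxtens_indexK.
Qed.

Lemma triv_rirr : rirr (fun _ => 1%:M : 'M[C]_1).
Proof.
split=> //.
- split=> [g h|g|i j]; first by rewrite mulmx1.
  + by apply/unitarymxP; rewrite trmx1 map_mx1 mulmx1.
  + exact: ccont_cst.
- move=> U _; have [->|Un0] := eqVneq U 0; [by left|right].
  rewrite /row_full eqn_leq rank_leq_col lt0n mxrank_eq0.
  exact: Un0.
Qed.

Definition Tn p a (F : G -> 'M[C]_p) (A : G -> 'M[C]_a) := fun g => F g *t A g.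

Section Main.
Hypothesis Hex : forall n, (0 < n)%N -> exists M : G -> 'M[C]_n, rirr M.
Hypothesis Huniq : forall n (M1 M2 : G -> 'M[C]_n),
  rirr M1 -> rirr M2 -> exists2 Q, Q \in unitmx & hom M1 M2 Q.

Lemma dim1 (A : G -> 'M[C]_1) : rirr A -> forall g, A g = 1%:M.
Proof.
move=> HA g; have [Q Qu HQ] := Huniq HA triv_rirr.
by rewrite -[A g]mulmx1 -(mulmxV Qu) mulmxA HQ mulmx1 mulmxV.
Qed.

Lemma unit_neq0 n (Q : 'M[C]_n.+1) : Q \in unitmx -> Q != 0.
Proof. by move=> Qu; apply/eqP => Q0; move: (mxrank_unit Qu); rewrite Q0 mxrank0. Qed.

Definition Pk k := forall (F : G -> 'M[C]_2) (A : G -> 'M[C]_k.+1),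
  rirr F -> rirr A ->
  [/\ forall (B : G -> 'M[C]_k.+2) (Cc : G -> 'M[C]_k) g,
        rirr B -> rirr Cc -> \tr (Tn F A g) = \tr (B g) + \tr (Cc g),
      forall b (B : G -> 'M[C]_b) Y, rirr B -> (k.+2 < b)%N ->
        hom (Tn F A) B Y -> Y = 0 &
      forall B : G -> 'M[C]_k.+2, rirr B ->
        exists Y0, [/\ Y0 != 0, hom (Tn F A) B Y0 &
           forall Y, hom (Tn F A) B Y -> exists c, Y = c *: Y0]].

Lemma P0 : Pk 0.
Proof.
move=> F A HF HA.
have eT g : Tn F A g = F g.
  rewrite /Tn dim1 //; apply/matrixP => i j; rewrite !mxE !ord1 eqxx mulr1.
  by congr (F g _ _); apply: val_inj; rewrite /= divn1.
have eH b (B : G -> 'M[C]_b) Y : hom (Tn F A) B Y -> hom F B Y.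
  by move=> H g; rewrite -eT.
split.
- by move=> B Cc g _ [].
- move=> b B Y HB hb H; apply: (schur_dim HF HB (eH _ _ _ H)).
  by rewrite neq_ltn hb.
- move=> B HB; have [Q Qu HQ] := Huniq HF HB.
  exists Q; split.
  + exact: unit_neq0.
  + by move=> g; rewrite eT.
  + by move=> Y H; apply: (schur_line HF HQ Qu (eH _ _ _ H)).
Qed.

Lemma zero_dual k (F : G -> 'M[C]_2) (Cd : G -> 'M[C]_k.+1) b (A : G -> 'M[C]_b) psi :
  Pk k -> rirr F -> rirr Cd -> rirr A -> (k.+2 < b)%N ->
  hom Cd (Tn F A) psi -> psi = 0.
Proof.
move=> Pkk HF HCd HA hb H.
have [[_ Fu _] _ _] := HF.
have [_ H2 _] := Pkk _ _ (cj_rirr HF) HCd.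
have := H2 b A (resh psi) HA hb ((dual Cd A psi Fu).1 H).
by rewrite -(resh0 2 k.+1 b) => /resh_inj.
Qed.

Lemma line_dual k (F : G -> 'M[C]_2) (Cd : G -> 'M[C]_k.+1) (A : G -> 'M[C]_k.+2) psi psi' :
  Pk k -> rirr F -> rirr Cd -> rirr A ->
  hom Cd (Tn F A) psi -> hom Cd (Tn F A) psi' -> psi' != 0 ->
  exists c, psi = c *: psi'.
Proof.
move=> Pkk HF HCd HA H H' n0.
have [[_ Fu _] _ _] := HF.
have [_ _ H3] := Pkk _ _ (cj_rirr HF) HCd.
have [Y0 [_ _ Hl]] := H3 A HA.
have [c e] := Hl _ ((dual Cd A psi Fu).1 H).
have [c' e'] := Hl _ ((dual Cd A psi' Fu).1 H').
have c'n0 : c' != 0.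
  apply/eqP => c0; move/eqP: n0; apply; apply: resh_inj.
  by rewrite e' c0 scale0r resh0.
exists (c / c'); apply: resh_inj.
by rewrite reshZ e' e scalerA divfK.
Qed.

Lemma exist_dual k (F : G -> 'M[C]_2) (Cd : G -> 'M[C]_k.+1) (A : G -> 'M[C]_k.+2) :
  Pk k -> rirr F -> rirr Cd -> rirr A ->
  exists2 psi, psi != 0 & hom Cd (Tn F A) psi.
Proof.
move=> Pkk HF HCd HA.
have [[_ Fu _] _ _] := HF.
have [_ _ H3] := Pkk _ _ (cj_rirr HF) HCd.
have [Y0 [Y0n0 HY0 _]] := H3 A HA.
set psi := (\matrix_(i, l) Y0 (mxtens_index ((mxtens_unindex l).1, i))
              (mxtens_unindex l).2 : 'M[C]_(k.+1, 2 * k.+2)).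
exists psi.
  apply/eqP => p0; move/eqP: Y0n0; apply.
  by rewrite -(reshK Y0) -/psi p0 resh0.
by apply/(dual Cd A psi Fu); rewrite reshK.
Qed.


Lemma split_ex N k (W : 'M[C]_(k, N)) :
  exists r1 r2 (P1 : 'M[C]_(r1, N)) (P2 : 'M[C]_(r2, N)),
  [/\ r1 = \rank W, (r1 + r2 = N)%N, P1 \is unitarymx, P2 \is unitarymx &
      [/\ P1^t* *m P1 + P2^t* *m P2 = 1%:M, (P1 :=: W)%MS & (P2 :=: orth W)%MS]].
Proof.
exists (\rank W), (\rank (orth W)), (schmidt (row_base W)),
  (schmidt (row_base (orth W))).
split => //; last split.
- exact: add_rank_ortho.
- exact: schmidt_unitarymx (rank_leq_col _).
- exact: schmidt_unitarymx (rank_leq_col _).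
- have U := schmidt_complete_unitarymx W.
  have := mulmxKtV (1%:M : 'M[C]_N) U (add_rank_ortho W).
  by rewrite mul1mx /schmidt_complete tr_col_mx map_row_mx mul_row_col.
- exact: eqmx_trans (eqmx_schmidt_free (row_base_free _)) (eq_row_base _).
- exact: eqmx_trans (eqmx_schmidt_free (row_base_free _)) (eq_row_base _).
Qed.

Lemma decomp m (F : G -> 'M[C]_2) (A : G -> 'M[C]_m.+2) (Cc : G -> 'M[C]_m.+1) :
  (forall k, (k <= m)%N -> Pk k) -> rirr F -> rirr A -> rirr Cc ->
  exists (P1 : 'M[C]_(m.+1, 2 * m.+2)) (P2 : 'M[C]_(m.+3, 2 * m.+2))
         (A2 : G -> 'M[C]_m.+3) (Q1 : 'M[C]_m.+1),
  [/\ P1 \is unitarymx, P2 \is unitarymx, P1^t* *m P1 + P2^t* *m P2 = 1%:M,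
      rirr A2 &
      [/\ hom A2 (Tn F A) P2, hom (restr (Tn F A) P1) (Tn F A) P1,
      Q1 \in unitmx & hom Cc (restr (Tn F A) P1) Q1]].
Proof.
move=> IH HF HA HC.
set T := Tn F A.
have HT : rrep T by case: HF => ? _ _; case: HA => ? _ _; apply: tens_rrep.
have Tu : forall g, T g \is unitarymx by case: HT.
have [phi phin0 Hphi] := exist_dual (IH m (leqnn m)) HF HC HA.
have phifree : row_free phi.
  rewrite -kermx_eq0; case: (rirr_stab HC (hom_ker Hphi)) => [->//|Hf].
  exfalso; move/negP: phin0; apply; apply/eqP.
  by have /sub_kermxP := submx_full 1%:M Hf; rewrite mul1mx.
have rphi : \rank phi = m.+1 := eqP phifree.
have Sphi : stab T phi := hom_img Hphi.
have [r1 [r2 [P1 [P2 [e1 e12 P1u P2u [Pc eP1 eP2]]]]]] := split_ex phi.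
have er1 : r1 = m.+1 by rewrite e1.
have er2 : r2 = m.+3 by move: e12; rewrite er1; lia.
clear e1; subst r1 r2.
have SP1 : stab T P1 := stab_eqmx (eqmx_sym eP1) Sphi.
have SP2 : stab T P2 := stab_eqmx (eqmx_sym eP2) (stab_ortho Tu Sphi).
set A2 := restr T P2.
have HA2r : rrep A2 := restr_rrep HT P2u SP2.
have HA2h : hom A2 T P2 := restr_hom P2u SP2.
have phiP1 : phi *m P1^t* *m P1 = phi by apply: proj_id => //; rewrite eP1.
have Hc : forall d (Cd : G -> 'M[C]_d) psi, rirr Cd -> (d <= m.+1)%N ->
    hom Cd T psi -> (psi <= phi)%MS.
  move=> [|k] Cd psi HCd hd Hpsi; first by case: HCd.
  case: (ltnP k m) => hk.
    have -> : psi = 0.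
      by apply: (zero_dual (IH k (ltnW hk)) HF HCd HA _ Hpsi); rewrite ltnS.
    by rewrite sub0mx.
  have ekm : k = m by apply/eqP; rewrite eqn_leq hk -ltnS hd.
  subst k.
  have [Q Qu HQ] := Huniq HCd HC.
  have Hphi' : hom Cd T (Q *m phi) := hom_comp HQ Hphi.
  have phi'n0 : Q *m phi != 0.
    apply/eqP => e; move/eqP: phin0; apply.
    by rewrite -(mulKmx Qu phi) e mulmx0.
  have [c ->] := line_dual (IH m (leqnn m)) HF HCd HA Hpsi Hphi' phi'n0.
  by rewrite scalemx_sub // submxMl.
have HA2 : rirr A2.
  split => //; move=> U HU.
  have [->|Un0] := eqVneq U 0; first by left.
  have [Uf|Unf] := boolP (row_full U); first by right.
  exfalso.
  have A2u : forall g, A2 g \is unitarymx by case: HA2r.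
  have HUo : stab A2 (orth U) := stab_ortho A2u HU.
  have eR : (\rank U + \rank (orth U) = m.+3)%N := add_rank_ortho U.
  have rU0 : (0 < \rank U)%N by rewrite lt0n mxrank_eq0.
  have rUlt : (\rank U < m.+3)%N.
    by rewrite ltn_neqAle rank_leq_col andbT; exact: Unf.
  have [X [HX Xn0 rX]] : exists X : 'M[C]_(m.+3, m.+3),
      [/\ stab A2 X, X != 0 & (\rank X <= m.+1)%N].
    case: (leqP (\rank U) m.+1) => h.
      by exists U; split.
    exists (orth U); split => //.
      by rewrite -mxrank_eq0 rank_ortho; move: h rUlt; move: (\rank U) => r; lia.
    by rewrite rank_ortho; move: h; move: (\rank U) => r; lia.
  set S := X *m P2.
  have HS : stab T S.
    by move=> g; rewrite /S -mulmxA -HA2h mulmxA submxMr // HX.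
  have rS : \rank S = \rank X.
    by rewrite mxrankMfree // /row_free mxrank_unitary.
  have Sn0 : S != 0 by rewrite -mxrank_eq0 rS mxrank_eq0.
  have [d [Cd [psi [HCd hd Hpsi psin0 psiS]]]] := sub_irrep HT HS Sn0.
  have p1 : (psi <= phi)%MS.
    by apply: (Hc d Cd psi HCd _ Hpsi); rewrite (leq_trans hd) // rS.
  have p2 : (psi <= orth phi)%MS.
    apply: submx_trans psiS _; apply: submx_trans (submxMl X P2) _.
    by rewrite eP2.
  have : (psi <= phi :&: orth phi)%MS by rewrite sub_capmx p1 p2.
  rewrite orthomx_ortho_disj submx0 => /eqP psi0.
  by rewrite psi0 eqxx in psin0.
exists P1, P2, A2, (phi *m P1^t*); split => //; split => //.
  exact: restr_hom P1u SP1.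
  rewrite -row_full_unit /row_full eqn_leq rank_leq_col.
  by rewrite -{1}rphi -{1}phiP1 mxrankM_maxl.
by move=> g; rewrite /restr mulmxA Hphi !mulmxA phiP1.
Qed.

Lemma decompY N r1 r2 (P1 : 'M[C]_(r1, N)) (P2 : 'M[C]_(r2, N)) b (Y : 'M[C]_(N, b)) :
  P1^t* *m P1 + P2^t* *m P2 = 1%:M ->
  Y = P1^t* *m (P1 *m Y) + P2^t* *m (P2 *m Y).
Proof. by move=> Pc; rewrite !mulmxA -mulmxDl Pc mul1mx. Qed.

Lemma Pstep m : (forall k, (k <= m)%N -> Pk k) -> Pk m.+1.
Proof.
move=> IH F A HF HA.
set T := Tn F A.
have HT : rrep T by case: HF => ? _ _; case: HA => ? _ _; apply: tens_rrep.
have Tu : forall g, T g \is unitarymx by case: HT.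
have [C0 HC0] := Hex (ltn0Sn m).
have P1Y0 : forall P1 (A2 : G -> 'M[C]_m.+3) Q1 b (B : G -> 'M[C]_b) Y,
    rirr B -> m.+1 != b -> Q1 \in unitmx -> hom C0 (restr T P1) Q1 ->
    hom (restr T P1) T P1 -> hom T B Y -> P1 *m Y = 0.
  move=> P1 A2 Q1 b B Y HB hb Q1u HQ1 HA1 HY.
  have := schur_dim HC0 HB (hom_comp HQ1 (hom_comp HA1 HY)) hb.
  by move=> e; rewrite -(mulKmx Q1u (P1 *m Y)) e mulmx0.
split.
- move=> B Cc g HB HCc.
  have [P1 [P2 [A2 [Q1 [P1u P2u Pc HA2 [HA2h HA1h Q1u HQ1]]]]]] :=
    decomp IH HF HA HCc.
  rewrite -[T g]mulmx1 -Pc mulmxDr mxtraceD !mulmxA.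
  rewrite mxtrace_mulC [X in _ + X]mxtrace_mulC !mulmxA.
  have -> : P2 *m T g *m P2^t* = A2 g by rewrite -HA2h mulmxtVK.
  rewrite -(hom_tr g HQ1 Q1u) addrC; congr (_ + _).
  by have [Rm Ru HR] := Huniq HA2 HB; apply: (hom_tr g HR Ru).
- move=> b B Y HB hb HY.
  have [P1 [P2 [A2 [Q1 [P1u P2u Pc HA2 [HA2h HA1h Q1u HQ1]]]]]] :=
    decomp IH HF HA HC0.
  have hb1 : m.+1 != b by apply/eqP => e; move: hb; rewrite -e; lia.
  have hb3 : m.+3 != b by apply/eqP => e; move: hb; rewrite -e; lia.
  rewrite (decompY Y Pc) (P1Y0 P1 A2 Q1 b B Y) //.
  by rewrite (schur_dim HA2 HB (hom_comp HA2h HY)) ?mulmx0 ?addr0.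
- move=> B HB.
  have [P1 [P2 [A2 [Q1 [P1u P2u Pc HA2 [HA2h HA1h Q1u HQ1]]]]]] :=
    decomp IH HF HA HC0.
  have [Rm Ru HR] := Huniq HA2 HB.
  have A2u : forall g, A2 g \is unitarymx by case: HA2 => -[].
  exists (P2^t* *m Rm); split.
  + apply/eqP => e; move: (unit_neq0 Ru); rewrite -[Rm]mul1mx.
    by rewrite -(unitarymxP P2u) -mulmxA e mulmx0 eqxx.
  + move=> g; rewrite mulmxA (hom_adj (A2u g) (Tu g) HA2h) -!mulmxA HR.
    by [].
  + move=> Y HY.
    have [c e] := schur_line HA2 HR Ru (hom_comp HA2h HY).
    exists c; rewrite (decompY Y Pc) (P1Y0 P1 A2 Q1 m.+3 B Y) //; last by apply/eqP; lia.
    by rewrite mulmx0 add0r e scalemxAr.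
Qed.

Lemma Pall k : Pk k.
Proof.
have [n Hn] := ubnP k; elim: n k Hn => // n IHn [|k] Hk; first exact: P0.
by apply: Pstep => j hj; apply: IHn; lia.
Qed.

Lemma tr_rec k (E : G -> 'M[C]_2) (A : G -> 'M[C]_k.+3) (A' : G -> 'M[C]_k.+2)
  (A'' : G -> 'M[C]_k.+1) g :
  rirr E -> rirr A -> rirr A' -> rirr A'' ->
  \tr (A g) = \tr (E g) * \tr (A' g) - \tr (A'' g).
Proof.
move=> HE HA HA' HA''.
have [H1 _ _] := Pall HE HA'.
by rewrite -mxtrace_tens (H1 A A'' g HA HA'') addrK.
Qed.

End Main.
End Rep.

Section Comb.
Variable (K : comRingType) (x : K).

Definition tm n i : K := (-1) ^+ i * ('C(n - i, i))%:R * x ^+ (n - 2 * i).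

Definition gs n := \sum_(i < n.+1) tm n i.

Lemma tm_small n i : (n < 2 * i)%N -> tm n i = 0.
Proof. by move=> h; rewrite /tm bin_small ?mulr0 ?mul0r //; lia. Qed.

Lemma tm0 n : tm n 0 = x ^+ n.
Proof. by rewrite /tm expr0 mul1r subn0 bin0 mul1r; congr (x ^+ _); lia. Qed.

Lemma tm_rec k i : tm k.+2 i.+1 = x * tm k.+1 i.+1 - tm k i.
Proof.
case: (ltnP k (2 * i)) => h.
  by rewrite !tm_small ?mulr0 ?subr0 //; lia.
have e1 : (k.+2 - i.+1 = (k - i).+1)%N by lia.
have e2 : (k.+2 - 2 * i.+1 = k - 2 * i)%N by lia.
have e3 : (k.+1 - i.+1 = k - i)%N by lia.
have e4 : x * ('C(k - i, i.+1))%:R * x ^+ (k.+1 - 2 * i.+1) =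
          ('C(k - i, i.+1))%:R * x ^+ (k - 2 * i).
  case: (ltnP (2 * i) k) => h'.
    have -> : (k - 2 * i = (k.+1 - 2 * i.+1).+1)%N by lia.
    by rewrite exprS; ring.
  have -> : 'C(k - i, i.+1) = 0%N by rewrite bin_small //; lia.
  by rewrite mulr0n mulr0 !mul0r.
rewrite /tm e1 e2 e3 binS natrD.
apply/eqP; rewrite -subr_eq0; apply/eqP.
transitivity ((-1) ^+ i.+1 * (('C(k - i, i.+1))%:R * x ^+ (k - 2 * i) -
   x * ('C(k - i, i.+1))%:R * x ^+ (k.+1 - 2 * i.+1))); first by rewrite !exprS; ring.
by rewrite e4 subrr mulr0.
Qed.

Lemma gs_rec k : gs k.+2 = x * gs k.+1 - gs k.
Proof.
rewrite /gs big_ord_recl [X in x * X]big_ord_recl.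
have -> : \sum_(i < k.+2) tm k.+2 (bump 0 i) =
          x * \sum_(i < k.+2) tm k.+1 i.+1 - \sum_(i < k.+2) tm k i.
  rewrite mulr_sumr -sumrB; apply: eq_bigr => i _.
  by rewrite tm_rec.
rewrite [X in x * X - _]big_ord_recr /= [X in _ - X]big_ord_recr /=.
rewrite (tm_small (n := k.+1) (i := k.+2)); last by lia.
rewrite (tm_small (n := k) (i := k.+1)); last by lia.
rewrite !addr0 !tm0 exprS; ring.
Qed.

Lemma gs_closed n :
  gs n = x ^+ n + \sum_(1 <= i < (n./2).+1) tm n i.
Proof.
have h2 := odd_double_half n; rewrite -muln2 in h2.
have h3 : (n./2 * 2 <= n <= n./2 * 2 + 1)%N by case: (odd n) h2 => /= h2; lia.
rewrite /gs -(big_mkord xpredT (tm n)) big_ltn // tm0; congr (_ + _).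
rewrite (big_cat_nat (n := (n./2).+1)) //=; last by lia.
rewrite [X in _ + X]big1_seq ?addr0 //.
move=> i /andP[_]; rewrite mem_index_iota => /andP[h _].
by apply: tm_small; lia.
Qed.

End Comb.

Theorem mainTheorem4 (G : topologicalType) (mul : G -> G -> G) (inv : G -> G)
    (one : G) (R : realType) :
  compact_group mul inv one ->
  (forall n : nat, (0 < n)%N -> exists D : G -> 'M[R[i]]_n, irrep mul D) ->
  (forall (n : nat) (D1 D2 : G -> 'M[R[i]]_n),
      irrep mul D1 -> irrep mul D2 -> rep_equiv D1 D2) ->
  forall (m : nat) (D : G -> 'M[R[i]]_m.+1) (E : G -> 'M[R[i]]_2),
    irrep mul D -> irrep mul E ->
    forall g : G,
      character D g =
        character E g ^+ m +
        \sum_(1 <= i < (m./2).+1)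
           (-1) ^+ i * ('C(m - i, i))%:R * character E g ^+ (m - 2 * i).
Proof.
move=> _ Hex0 Huniq0 m D E HD HE g.
have Hex : forall n, (0 < n)%N -> exists M : G -> 'M[R[i]]_n, rirr mul M.
  move=> n n0; have [D' HD'] := Hex0 n n0.
  by exists (fun g => (D' g)^T); apply: irrep_rirr.
have Huniq : forall n (M1 M2 : G -> 'M[R[i]]_n), rirr mul M1 -> rirr mul M2 ->
    exists2 Q, Q \in unitmx & hom M1 M2 Q.
  move=> n M1 M2 H1 H2.
  have [Q Qu HQ] := equiv_hom (Huniq0 n _ _ (rirr_irrep H1) (rirr_irrep H2)).
  by exists Q => // h; have := HQ h; rewrite !trmxK.
have HE' := irrep_rirr HE.
set x := character E g.
have key : forall k (A : G -> 'M[R[i]]_k.+1), rirr mul A -> \tr (A g) = gs x k.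
  move=> k; have [n Hn] := ubnP k; elim: n k Hn => // n IHn [|[|k]] Hk A HA.
  - by rewrite (dim1 Huniq HA) /gs big_ord_recl big_ord0 addr0 tm0 mxtrace1.
  - have [Q Qu HQ] := Huniq _ _ _ HA HE'.
    rewrite (hom_tr g HQ Qu) mxtrace_tr /gs !big_ord_recl big_ord0 addr0 tm0.
    by rewrite tm_small // addr0.
  - have [A' HA'] := Hex k.+2 isT.
    have [A'' HA''] := Hex k.+1 isT.
    rewrite (tr_rec Hex Huniq g HE' HA HA' HA'') mxtrace_tr gs_rec.
    by rewrite (IHn k.+1 _ A' HA') ?(IHn k _ A'' HA'') //; lia.
rewrite /character -mxtrace_tr (key m _ (irrep_rirr HD)) gs_closed.
by [].
Qed.
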